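(* Let $\mathcal{X},\mathcal{Y}_1,\mathcal{Y}_2$ be finite sets and consider the binary hypothesis testing system described in the context, with null pmf $P_{XY_1Y_2}$ and alternative pmf $\bar P_{XY_1Y_2}$, where $\bar P_{XY_1Y_2}(x,y_1,y_2)>0$ for all $(x,y_1,y_2)$. If $R_1\ge H(X)$ and $R_2\ge H(Y_1|X)$ (entropies computed under $P_{XY_1Y_2}$), then for every $\epsilon_1,\epsilon_2\in(0,1)$ the region $\mathcal{E}(R_1,R_2,\epsilon_1,\epsilon_2)$ equals the set of all nonnegative pairs $(\theta_1,\theta_2)$ with \[\theta_1\le D(P_{XY_1}\|\bar P_{XY_1}),\qquad \theta_2\le D(P_{XY_1Y_2}\|\bar P_{XY_1Y_2}).\]
   Context: Setting: Under hypothesis $\mathcal{H}=1$ (null) the triples $(X_t,Y_{1,t},Y_{2,t})$, $t=1,\dots,n$, are i.i.d. $\sim P_{XY_1Y_2}$; under $\mathcal{H}=2$ (alternative) i.i.d. $\sim \bar P_{XY_1Y_2}$. $P_{XY_1}$, $\bar P_{XY_1}$ denote marginals. A code of blocklength $n$: encoder $\phi_{1,n}:\mathcal{X}^n\to\{1,\dots,\|\phi_{1,n}\|\}$, $M_1=\phi_{1,n}(X^n)$ sent to both detectors; Detector 1 (observing $Y_1^n$) computes $M_2=\phi_{2,n}(M_1,Y_1^n)\in\{1,\dots,\|\phi_{2,n}\|\}$, sent to Detector 2, and decides $\hat{\mathcal H}_1=\psi_{1,n}(M_1,Y_1^n)\in\{1,2\}$; Detector 2 (observing $Y_2^n$) decides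 $\hat{\mathcal H}_2=\psi_{2,n}(M_1,M_2,Y_2^n)\in\{1,2\}$. Let $\alpha_{k,n}=\Pr[\hat{\mathcal H}_k\neq 1\mid\mathcal H=1]$, $\beta_{k,n}=\Pr[\hat{\mathcal H}_k\neq 2\mid\mathcal H=2]$. $(\theta_1,\theta_2)$ is achievable for $(R_1,R_2,\epsilon_1,\epsilon_2)$ if there are codes for all $n$ with $\limsup_n\alpha_{k,n}\le\epsilon_k$, $\theta_k\le\liminf_n-\frac1n\log\beta_{k,n}$, $\limsup_n\frac1n\log\|\phi_{k,n}\|\le R_k$, $k=1,2$. $\mathcal{E}(R_1,R_2,\epsilon_1,\epsilon_2)$ is the closure of the set of achievable pairs. *)

(* Defs.v *)
From HB Require Import structures.
From mathcomp Require Import all_boot all_order all_algebra.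
From mathcomp Require Import all_classical all_reals all_analysis.
Set Implicit Arguments. Unset Strict Implicit. Unset Printing Implicit Defensive.
Import Order.TTheory GRing.Theory Num.Theory.
Import numFieldNormedType.Exports.
Local Open Scope classical_set_scope.
Local Open Scope ring_scope.

Section HT.
Variables (R : realType) (X Y1 Y2 : finType).

Definition triple := (X * Y1 * Y2)%type.

Definition is_pmf (T : finType) (Q : T -> R) :=
  (forall t, 0 <= Q t) /\ \sum_(t : T) Q t = 1.

Definition marg_X (Q : triple -> R) (x : X) : R :=
  \sum_(y1 : Y1) \sum_(y2 : Y2) Q (x, y1, y2).
Definition marg_XY1 (Q : triple -> R) (xy : X * Y1) : R :=
  \sum_(y2 : Y2) Q (xy.1, xy.2, y2).

(* natural logarithm throughout; 0 ln 0 = 0 since ln 0 = 0 in mathcomp *)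
Definition entropy_X (Q : triple -> R) : R :=
  - \sum_(x : X) marg_X Q x * ln (marg_X Q x).
Definition cond_entropy_Y1_X (Q : triple -> R) : R :=
  - \sum_(xy : X * Y1) marg_XY1 Q xy * ln (marg_XY1 Q xy / marg_X Q xy.1).
Definition kl (T : finType) (Q Qb : T -> R) : R :=
  \sum_(t : T) Q t * ln (Q t / Qb t).

(* a code of blocklength n; messages of phi_k take values in 'I_(M_k),
   i.e. ||phi_k|| = M_k.  Decisions: [true] means "H-hat = 2", [false]
   means "H-hat = 1". *)
Record code (n : nat) := Code {
  M1 : nat; M2 : nat;
  phi1 : n.-tuple X -> 'I_M1;
  phi2 : 'I_M1 -> n.-tuple Y1 -> 'I_M2;
  psi1 : 'I_M1 -> n.-tuple Y1 -> bool;
  psi2 : 'I_M1 -> 'I_M2 -> n.-tuple Y2 -> bool }.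

Definition prob_iid (Q : triple -> R) (n : nat) (E : pred (n.-tuple triple)) : R :=
  \sum_(t : n.-tuple triple | E t) \prod_(i < n) Q (tnth t i).

Definition xs n (t : n.-tuple triple) : n.-tuple X := map_tuple (fun z => z.1.1) t.
Definition y1s n (t : n.-tuple triple) : n.-tuple Y1 := map_tuple (fun z => z.1.2) t.
Definition y2s n (t : n.-tuple triple) : n.-tuple Y2 := map_tuple (fun z => z.2) t.

Definition dec1 n (c : code n) (t : n.-tuple triple) : bool :=
  psi1 (phi1 c (xs t)) (y1s t).
Definition dec2 n (c : code n) (t : n.-tuple triple) : bool :=
  let m1 := phi1 c (xs t) in
  psi2 m1 (phi2 m1 (y1s t)) (y2s t).

Definition alpha (P : triple -> R) n (c : code n) (k : bool) : R :=
  prob_iid P (fun t => if k then dec2 c t else dec1 c t).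
Definition beta (Pb : triple -> R) n (c : code n) (k : bool) : R :=
  prob_iid Pb (fun t => ~~ (if k then dec2 c t else dec1 c t)).

Definition exponent (b : R) (n : nat) : \bar R :=
  if b == 0 then +oo%E else (- ln b / n%:R)%:E.

Definition achievable (P Pb : triple -> R) (R1 R2 e1 e2 : R) (th : R * R) :=
  exists c : forall n, code n,
    [/\ (limn_esup (fun n => (alpha P (c n) false)%:E) <= e1%:E)%E,
        (limn_esup (fun n => (alpha P (c n) true)%:E) <= e2%:E)%E,
        (th.1%:E <= limn_einf (fun n => exponent (beta Pb (c n) false) n))%E,
        (th.2%:E <= limn_einf (fun n => exponent (beta Pb (c n) true) n))%E &
      (limn_esup (fun n => (ln (M1 (c n))%:R / n%:R)%:E) <= R1%:E)%E /\
      (limn_esup (fun n => (ln (M2 (c n))%:R / n%:R)%:E) <= R2%:E)%E].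

Definition region (P Pb : triple -> R) (R1 R2 e1 e2 : R) : set (R * R) :=
  closure (achievable P Pb R1 R2 e1 e2).

End HT.

(* Main.v *)
Require Import Defs.
From HB Require Import structures.
From mathcomp Require Import all_boot all_order all_algebra.
From mathcomp Require Import all_classical all_reals all_analysis.
From mathcomp Require Import lra.
Import Order.TTheory GRing.Theory Num.Theory.
Local Open Scope ring_scope.

Module PropHelpers.
Import numFieldNormedType.Exports.
Set Implicit Arguments. Unset Strict Implicit. Unset Printing Implicit Defensive.

Section Lim.
Variable R : realType.

Lemma limsupE (u : (\bar R)^nat) : limn_esup u = ereal_inf (range (esups u)).
Proof. by rewrite limn_esup_lim; apply: cvg_lim => //; exact: cvg_esups_inf. Qed.

Lemma liminfE (u : (\bar R)^nat) : limn_einf u = ereal_sup (range (einfs u)).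
Proof. by rewrite limn_einf_lim; apply: cvg_lim => //; exact: cvg_einfs_sup. Qed.

Lemma esup_le (u : R^nat) (l : R) :
  (forall e, 0 < e -> exists N, forall n, (N <= n)%N -> u n <= l + e) ->
  (limn_esup (fun n => (u n)%:E) <= l%:E)%E.
Proof.
move=> H; apply/lee_addgt0Pr => e e0; have [N HN] := H e e0.
rewrite limsupE; apply: ge_ereal_inf; exists (esups (fun n => (u n)%:E) N).
  by exists N.
apply: ge_ereal_sup => _ [n /= Nn <-]; rewrite -EFinD lee_fin; exact: HN.
Qed.

Lemma esup_ev (u : R^nat) (l : R) :
  (limn_esup (fun n => (u n)%:E) <= l%:E)%E ->
  forall e, 0 < e -> exists N, forall n, (N <= n)%N -> u n <= l + e.
Proof.
rewrite limsupE => H e e0.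
have : (ereal_inf (range (esups (fun n => (u n)%:E))) < (l + e)%:E)%E.
  by apply: (le_lt_trans H); rewrite lte_fin ltrDl.
move=> /ereal_inf_lt [_ [N _ <-]] HN; exists N => n Nn.
rewrite -lee_fin; apply: le_trans (ltW HN).
by apply: ereal_sup_ubound; exists n.
Qed.

Lemma einf_ge (v : (\bar R)^nat) (l : R) :
  (forall e, 0 < e -> exists N, forall n, (N <= n)%N -> ((l - e)%:E <= v n)%E) ->
  (l%:E <= limn_einf v)%E.
Proof.
move=> H; apply/lee_subgt0Pr => e e0; have [N HN] := H e e0.
rewrite liminfE; apply: le_ereal_sup_tmp; exists (einfs v N).
  by exists N.
apply: le_ereal_inf_tmp => _ [n /= Nn <-]; rewrite -EFinB; exact: HN.
Qed.

Lemma einf_ev (v : (\bar R)^nat) (l : R) :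
  (l%:E <= limn_einf v)%E ->
  forall e, 0 < e -> exists N, forall n, (N <= n)%N -> ((l - e)%:E <= v n)%E.
Proof.
rewrite liminfE => H e e0.
have : ((l - e)%:E < ereal_sup (range (einfs v)))%E.
  by apply: (lt_le_trans _ H); rewrite lte_fin ltrBlDr ltrDl.
move=> /ereal_sup_gt [_ [N _ <-]] HN; exists N => n Nn.
apply: le_trans (ltW HN) _.
by apply: ereal_inf_lbound; exists n.
Qed.

End Lim.


Section Tup.
Variable R : realType.

Definition w (T : finType) n (Q : T -> R) (t : n.-tuple T) := \prod_(i < n) Q (tnth t i).

Lemma sum_tuple_ffun (T : finType) n (G : n.-tuple T -> R) :
  \sum_(t : n.-tuple T) G t = \sum_(f : {ffun 'I_n -> T}) G [tuple f i | i < n].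
Proof.
apply: (reindex (fun f : {ffun 'I_n -> T} => [tuple f i | i < n])).
exists (fun t => [ffun i => tnth t i]) => [f _|t _].
  by apply/ffunP => i; rewrite ffunE tnth_mktuple.
by apply: eq_from_tnth => i; rewrite tnth_mktuple ffunE.
Qed.

Lemma prodsum (T : finType) n (F : 'I_n -> T -> R) :
  \sum_(t : n.-tuple T) \prod_(i < n) F i (tnth t i) = \prod_(i < n) \sum_x F i x.
Proof.
rewrite bigA_distr_bigA /= sum_tuple_ffun; apply: eq_bigr => f _.
by apply: eq_bigr => i _; rewrite tnth_mktuple.
Qed.

Lemma sum_tuple_pair (A B : finType) n (G : n.-tuple (A * B) -> R) :
  \sum_(t : n.-tuple (A * B)) G t =
  \sum_(u : n.-tuple A) \sum_(v : n.-tuple B) G [tuple (tnth u i, tnth v i) | i < n].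
Proof.
rewrite pair_big /=.
apply: (reindex (fun p : n.-tuple A * n.-tuple B => [tuple (tnth p.1 i, tnth p.2 i) | i < n])).
exists (fun t => (map_tuple fst t, map_tuple snd t)) => [[u v] _|t _] /=.
  congr pair; apply: eq_from_tnth => i; by rewrite tnth_map tnth_mktuple.
apply: eq_from_tnth => i; rewrite tnth_mktuple !tnth_map.
by case: (tnth t i).
Qed.

Lemma marg_sum (A B : finType) n (Q : A * B -> R) (G : n.-tuple A -> R) :
  \sum_(t : n.-tuple (A * B)) w Q t * G (map_tuple fst t) =
  \sum_(u : n.-tuple A) w (fun a => \sum_b Q (a, b)) u * G u.
Proof.
rewrite sum_tuple_pair; apply: eq_bigr => u _.
have H : forall v : n.-tuple B, map_tuple fst [tuple (tnth u i, tnth v i) | i < n] = u.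
  by move=> v; apply: eq_from_tnth => i; rewrite tnth_map tnth_mktuple.
under eq_bigr => v _ do rewrite H.
rewrite -mulr_suml /w; congr (_ * _).
rewrite -(prodsum (fun i b => Q (tnth u i, b))).
by apply: eq_bigr => v _; apply: eq_bigr => i _; rewrite tnth_mktuple.
Qed.

Definition mean (T : finType) (Q : T -> R) (f : T -> R) := \sum_x Q x * f x.
Definition var (T : finType) (Q : T -> R) (f : T -> R) :=
  \sum_x Q x * (f x - mean Q f) ^+ 2.

Lemma prod_if1 n (i : 'I_n) (c : 'I_n -> R) :
  \prod_(k < n) (if k == i then c k else 1) = c i.
Proof.
rewrite (bigD1 i) //= eqxx big1 ?mulr1 // => k /negbTE ->; done.
Qed.

Lemma second_moment (T : finType) (Q : T -> R) n (g : T -> R) :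
  \sum_x Q x = 1 -> \sum_x Q x * g x = 0 ->
  \sum_(t : n.-tuple T) w Q t * (\sum_(i < n) g (tnth t i)) ^+ 2 =
  n%:R * \sum_x Q x * g x ^+ 2.
Proof.
move=> Q1 Qg0.
have E : forall t : n.-tuple T, w Q t * (\sum_(i < n) g (tnth t i)) ^+ 2 =
   \sum_(i < n) \sum_(j < n) \prod_(k < n)
     (Q (tnth t k) * (if k == i then g (tnth t k) else 1) *
                    (if k == j then g (tnth t k) else 1)).
  move=> t; rewrite expr2 big_distrl /= big_distrr /=; apply: eq_bigr => i _.
  rewrite big_distrr /= big_distrr /=; apply: eq_bigr => j _.
  by rewrite !big_split /= !prod_if1 /w mulrA.
under eq_bigr do rewrite E.
rewrite exchange_big /=; under eq_bigr do rewrite exchange_big /=.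
have F : forall i j : 'I_n, \sum_(t : n.-tuple T) \prod_(k < n)
     (Q (tnth t k) * (if k == i then g (tnth t k) else 1) *
                    (if k == j then g (tnth t k) else 1)) =
     if i == j then \sum_x Q x * g x ^+ 2 else 0.
  move=> i j; rewrite (prodsum (fun k x => Q x * (if k == i then g x else 1) *
                    (if k == j then g x else 1))).
  rewrite (bigD1 i) //=.
  case: (eqVneq i j) => [<-|ij].
    rewrite [X in _ * X]big1; last first.
      move=> k ki; rewrite (negbTE ki).
      by under eq_bigr do rewrite !mulr1.
    by rewrite mulr1; under eq_bigr do rewrite eqxx -mulrA -expr2.
  under eq_bigr do rewrite eqxx mulr1.
  by rewrite Qg0 mul0r.
rewrite (eq_bigr (fun i : 'I_n => \sum_(j < n) if i == j then \sum_x Q x * g x ^+ 2 else 0)); last first.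
  by move=> i _; apply: eq_bigr => j _; exact: F.
rewrite (eq_bigr (fun _ => \sum_x Q x * g x ^+ 2)); last first.
  move=> i _; rewrite (bigD1 i) //= eqxx [X in _ + X]big1 ?addr0 //.
  by move=> j /negbTE; rewrite eq_sym => ->.
by rewrite sumr_const card_ord mulr_natl.
Qed.

Lemma w_ge0 (T : finType) n (Q : T -> R) (t : n.-tuple T) :
  (forall x, 0 <= Q x) -> 0 <= w Q t.
Proof. by move=> Q0; apply: prodr_ge0 => i _. Qed.

Lemma sum_w (T : finType) n (Q : T -> R) :
  \sum_x Q x = 1 -> \sum_(t : n.-tuple T) w Q t = 1.
Proof.
move=> Q1; rewrite /w (prodsum (fun _ x => Q x)).
by rewrite big1 // => i _.
Qed.

Lemma cheb (T : finType) (Q : T -> R) n (f : T -> R) (a : R) :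
  (forall x, 0 <= Q x) -> \sum_x Q x = 1 -> 0 < a ->
  \sum_(t : n.-tuple T | a <= `|\sum_(i < n) f (tnth t i) - n%:R * mean Q f|) w Q t
  <= n%:R * var Q f / a ^+ 2.
Proof.
move=> Q0 Q1 a0.
set g := fun x => f x - mean Q f.
have Sg : forall t : n.-tuple T,
    \sum_(i < n) f (tnth t i) - n%:R * mean Q f = \sum_(i < n) g (tnth t i).
  by move=> t; rewrite /g sumrB sumr_const card_ord mulr_natl.
have g0 : \sum_x Q x * g x = 0.
  rewrite /g; under eq_bigr do rewrite mulrBr.
  by rewrite sumrB -/(mean Q f) -mulr_suml Q1 mul1r subrr.
have := second_moment n Q1 g0.
rewrite -/(var Q f) => <-.
rewrite mulr_suml big_mkcond /=; apply: ler_sum => t _.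
rewrite Sg; case: ifP => H.
  rewrite -mulrA ler_peMr ?w_ge0 //.
  rewrite ler_pdivlMr ?exprn_gt0 // mul1r.
  set S := \sum_(i < n) _; rewrite -(real_normK (num_real S)).
  have := normr_ge0 S; nra.
apply: mulr_ge0; first by apply: mulr_ge0; [exact: w_ge0|exact: sqr_ge0].
by rewrite invr_ge0 exprn_ge0 // ltW.
Qed.

End Tup.



Definition ev (P : nat -> Prop) := exists N, forall n, (N <= n)%N -> P n.

Lemma evI (P Q : nat -> Prop) : ev P -> ev Q -> ev (fun n => P n /\ Q n).
Proof.
move=> [N1 H1] [N2 H2]; exists (maxn N1 N2) => n; rewrite geq_max => /andP[a b].
by split; [apply: H1|apply: H2].
Qed.

Lemma evW (P Q : nat -> Prop) : (forall n, P n -> Q n) -> ev P -> ev Q.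
Proof. by move=> PQ [N H]; exists N => n /H /PQ. Qed.

Section Aux.
Variable R : realType.

Lemma ev_nat (x : R) : ev (fun n => x <= n%:R).
Proof.
case: (lerP x 0) => [x0|x0]; first by exists 0%N => n _; apply: le_trans x0 _.
exists (Num.Def.archi_bound x) => n Nn; apply: le_trans (ltW (archi_boundP (ltW x0))) _.
by rewrite ler_nat.
Qed.

Lemma ev_gt0 : ev (fun n => 0 < n%:R :> R).
Proof. by exists 1%N => n n1; rewrite ltr0n. Qed.

Lemma ev_div (C e : R) : 0 < e -> ev (fun n => C / n%:R <= e).
Proof.
move=> e0; apply: evW (evI ev_gt0 (ev_nat (C / e))) => n [n0 Hn].
by rewrite ler_pdivrMr // mulrC -ler_pdivrMr.
Qed.

Definition dl (n : nat) : R := (Num.sqrt (Num.sqrt n%:R))^-1.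

Lemma dl_gt0 n : (0 < n)%N -> 0 < dl n.
Proof. by move=> n0; rewrite /dl invr_gt0 !sqrtr_gt0 ltr0n. Qed.

Lemma ndl n : (0 < n)%N -> n%:R * dl n ^+ 2 = Num.sqrt n%:R.
Proof.
move=> n0; rewrite /dl exprVn sqr_sqrtr ?sqrtr_ge0 //.
have s0 : 0 < Num.sqrt (n%:R : R) by rewrite sqrtr_gt0 ltr0n.
rewrite -{1}(@sqr_sqrtr _ n%:R) ?ler0n // expr2 -mulrA divff ?mulr1 //.
by rewrite gt_eqF.
Qed.

Lemma ev_ndl (C : R) : ev (fun n => 0 < dl n /\ C <= n%:R * dl n ^+ 2).
Proof.
apply: evW (evI (ev_nat (C ^+ 2)) (evI ev_gt0 (ev_nat 0))) => n [Cn [n0 _]].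
have n0' : (0 < n)%N by rewrite -(ltr0n R).
split; first exact: dl_gt0.
rewrite ndl //; apply: le_trans (ler_norm C) _.
rewrite -(sqrtr_sqr C) ler_sqrt //.
Qed.

Lemma ev_dl (e : R) : 0 < e -> ev (fun n => dl n <= e).
Proof.
move=> e0; apply: evW (evI ev_gt0 (ev_nat (e^-1 ^+ 4))) => n [n0 Hn].
have ei0 : 0 < e^-1 by rewrite invr_gt0.
have h1 : e^-1 ^+ 2 <= Num.sqrt n%:R.
  have : Num.sqrt ((e^-1 ^+ 2) ^+ 2) <= Num.sqrt n%:R by rewrite ler_sqrt // -exprM.
  by rewrite sqrtr_sqr ger0_norm // exprn_ge0 // ltW.
have h2 : e^-1 <= Num.sqrt (Num.sqrt n%:R).
  have : Num.sqrt (e^-1 ^+ 2) <= Num.sqrt (Num.sqrt n%:R) by rewrite ler_sqrt // sqrtr_ge0.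
  by rewrite sqrtr_sqr ger0_norm // ltW.
rewrite /dl -(invrK e) lef_pV2 ?posrE ?sqrtr_gt0 //.
Qed.


Lemma wlln (T : finType) (Q : T -> R) (f : T -> R) (d : nat -> R) :
  (forall x, 0 <= Q x) -> \sum_x Q x = 1 ->
  (forall C, ev (fun n => 0 < d n /\ C <= n%:R * d n ^+ 2)) ->
  forall e, 0 < e -> ev (fun n =>
    \sum_(t : n.-tuple T | n%:R * d n <= `|\sum_(i < n) f (tnth t i) - n%:R * mean Q f|)
       w Q t <= e).
Proof.
move=> Q0 Q1 Hd e e0.
apply: evW (Hd (Num.max (var Q f / e) 1)) => n [d0 H].
have nd0 : 0 < n%:R * d n ^+ 2 by apply: lt_le_trans H; rewrite lt_max ltr01 orbT.
have n0 : 0 < n%:R :> R by move: nd0; rewrite pmulr_lgt0 // exprn_gt0.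
apply: le_trans (cheb n f Q0 Q1 (a := n%:R * d n) _) _; first exact: mulr_gt0.
have hv : var Q f / e <= n%:R * d n ^+ 2 by apply: le_trans H; rewrite le_max lexx.
rewrite ler_pdivrMr // in hv.
rewrite ler_pdivrMr ?exprn_gt0 ?mulr_gt0 // exprMn.
set N := n%:R in hv n0 *; set V := var Q f in hv *; nra.
Qed.

Lemma ev_cst_sq (dd : R) : 0 < dd -> forall C, ev (fun n => 0 < dd /\ C <= n%:R * dd ^+ 2).
Proof.
move=> d0 C; apply: evW (ev_nat (C / dd ^+ 2)) => n Hn; split => //.
by rewrite -ler_pdivrMr // exprn_gt0.
Qed.

End Aux.


Section Ev.
Variable R : realType.

Definition pr (T : finType) n (Q : T -> R) (E : pred (n.-tuple T)) :=
  \sum_(t | E t) w Q t.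

Lemma pr_le (T : finType) n (Q : T -> R) (E F : pred (n.-tuple T)) :
  (forall x, 0 <= Q x) -> (forall t, E t -> F t) -> pr Q E <= pr Q F.
Proof.
move=> Q0 EF; rewrite /pr [X in _ <= X]big_mkcond [X in X <= _]big_mkcond /=.
apply: ler_sum => t _; case: ifP => Et; first by rewrite EF.
by case: ifP => _; rewrite ?w_ge0.
Qed.

Lemma pr_union (T : finType) n (Q : T -> R) (E E1 E2 : pred (n.-tuple T)) :
  (forall x, 0 <= Q x) -> (forall t, E t -> E1 t || E2 t) ->
  pr Q E <= pr Q E1 + pr Q E2.
Proof.
move=> Q0 EF; rewrite /pr [X in _ <= X + _]big_mkcond [X in _ <= _ + X]big_mkcond.
rewrite [X in X <= _]big_mkcond -big_split /=.
apply: ler_sum => t _; have w0 : 0 <= w Q t by apply: w_ge0.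
have := EF t; case: (E t); case: (E1 t); case: (E2 t) => //= H; try lra.

Qed.

Lemma pr_ge0 (T : finType) n (Q : T -> R) (E : pred (n.-tuple T)) :
  (forall x, 0 <= Q x) -> 0 <= pr Q E.
Proof. by move=> Q0; apply: sumr_ge0 => t _; exact: w_ge0. Qed.

Lemma w_eq0 (T : finType) n (Q : T -> R) (t : n.-tuple T) i :
  Q (tnth t i) = 0 -> w Q t = 0.
Proof. by move=> H; rewrite /w (bigD1 i) //= H mul0r. Qed.

Lemma pr_zero (T : finType) n (Q : T -> R) (E : pred (n.-tuple T)) :
  (forall t, E t -> exists i, Q (tnth t i) = 0) -> pr Q E = 0.
Proof. by move=> H; apply: big1 => t /H [i] /w_eq0. Qed.

Lemma pr_compl (T : finType) n (Q : T -> R) (E : pred (n.-tuple T)) :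
  \sum_x Q x = 1 -> pr Q (fun t => ~~ E t) = 1 - pr Q E.
Proof.
move=> Q1; rewrite -(sum_w n Q1) (bigID E) /= /pr; lra.
Qed.

Definition llr (T : finType) (Q Qb : T -> R) x := ln (Q x / Qb x).

Lemma w_llr (T : finType) n (Q Qb : T -> R) (t : n.-tuple T) :
  (forall i, 0 < Q (tnth t i)) -> (forall x, 0 < Qb x) ->
  w Q t = w Qb t * expR (\sum_(i < n) llr Q Qb (tnth t i)).
Proof.
move=> Qp Qbp; rewrite expR_sum /w -big_split /=; apply: eq_bigr => i _.
rewrite /llr lnK ?posrE ?divr_gt0 // mulrC divfK //.
by rewrite gt_eqF.
Qed.

Lemma w_llr_le (T : finType) n (Q Qb : T -> R) (t : n.-tuple T) :
  (forall x, 0 <= Q x) -> (forall x, 0 < Qb x) ->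
  w Q t <= w Qb t * expR (\sum_(i < n) llr Q Qb (tnth t i)).
Proof.
move=> Q0 Qbp; case: (boolP [forall i, 0 < Q (tnth t i)]).
  by move/forallP => H; rewrite (w_llr H Qbp).
rewrite negb_forall => /existsP [i]; rewrite -leNgt => Hi.
have -> : w Q t = 0 by apply: (@w_eq0 _ _ _ _ i); apply/le_anti; rewrite Hi Q0.
by rewrite mulr_ge0 ?w_ge0 ?expR_ge0 // => x; apply: ltW.
Qed.

End Ev.


Section Conv.
Variable R : realType.

Lemma stein_conv (T : finType) (Q Qb : T -> R) (A : forall n, pred (n.-tuple T)) (e th : R) :
  (forall x, 0 <= Q x) -> \sum_x Q x = 1 -> (forall x, 0 < Qb x) -> e < 1 ->
  (forall eps, 0 < eps -> ev (fun n => 1 - pr Q (A n) <= e + eps)) ->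
  (th%:E <= limn_einf (fun n => exponent (pr Qb (A n)) n))%E ->
  th <= kl Q Qb.
Proof.
move=> Q0 Q1 Qbp e1 Ha Hth.
have Qb0 : forall x, 0 <= Qb x by move=> x; apply: ltW.
rewrite leNgt; apply/negP => thD.
set D := kl Q Qb in thD.
set dd := (th - D) / 4.
have dd0 : 0 < dd by rewrite divr_gt0 // subr_gt0.
set eta := (1 - e) / 3.
have eta0 : 0 < eta by rewrite divr_gt0 // subr_gt0.
have Hmean : mean Q (llr Q Qb) = D by [].
have [N H] := evI (Ha eta eta0) (evI (@wlln R T Q (llr Q Qb) (fun _ => dd) Q0 Q1 (ev_cst_sq dd0) _ eta0)
   (evI (einf_ev Hth dd0) (evI (ev_div (- ln eta) dd0) (@ev_gt0 R)))).
have [h1 [h2 [h3 [h4 h5]]]] := H N (leqnn N).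
move: h1 h2 h3 h4 h5; set n := N => h1 h2 h3 h4 h5.
rewrite Hmean in h2.
set bad := fun t : n.-tuple T =>
  n%:R * dd <= `|\sum_(i < n) llr Q Qb (tnth t i) - n%:R * D| in h2.
set G := fun t => A n t && ~~ bad t.
have pG : eta <= pr Q G.
  have : pr Q (A n) <= pr Q G + pr Q bad.
    by apply: pr_union => // t; rewrite /G; case: (A n t); case: (bad t).
  have h2b : pr Q bad <= eta := h2.
  rewrite /eta in h1 h2b *; lra.
have pb : pr Q G * expR (- (n%:R * (D + dd))) <= pr Qb (A n).
  apply: le_trans (pr_le (F := A n) Qb0 _ : pr Qb G <= _); last first.
    by move=> t /andP[].
  rewrite /pr mulr_suml; apply: ler_sum => t /andP [At nb].
  have := @w_llr_le R T n Q Qb t Q0 Qbp.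
  set S := \sum_(i < n) _ => HS.
  have SD : S <= n%:R * (D + dd).
    move: nb; rewrite /bad -/S -ltNge => /(le_lt_trans (ler_norm _)); lra.
  have Hexp : expR S <= expR (n%:R * (D + dd)) by rewrite ler_expR.
  rewrite expRN ler_pdivrMr ?expR_gt0 //; apply: (le_trans HS).
  by rewrite ler_wpM2l ?w_ge0.
have bpos : 0 < pr Qb (A n).
  by apply: lt_le_trans pb; rewrite mulr_gt0 ?expR_gt0 // (lt_le_trans eta0).
rewrite /exponent gt_eqF // lee_fin in h3.
have lnb : ln eta - n%:R * (D + dd) <= ln (pr Qb (A n)).
  have : eta * expR (- (n%:R * (D + dd))) <= pr Qb (A n).
    by apply: le_trans pb; rewrite ler_wpM2r ?expR_ge0.
  have e1' : 0 < eta * expR (- (n%:R * (D + dd))) by apply: mulr_gt0; rewrite ?expR_gt0.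
  rewrite -ler_ln ?posrE //.
  by rewrite lnM ?posrE ?expR_gt0 // expRK.
have n0 : 0 < n%:R :> R by [].
rewrite ler_pdivlMr // in h3.
rewrite ler_pdivrMr // in h4.
rewrite /dd in h3 h4 lnb dd0; nra.
Qed.

End Conv.


Section Main1.
Variables (R : realType) (X Y1 Y2 : finType).
Implicit Types (P Pb : triple X Y1 Y2 -> R).

Lemma pr_marg P n (E : pred (n.-tuple (X * Y1))) :
  prob_iid P (fun t => E (map_tuple fst t)) = pr (marg_XY1 P) E.
Proof.
rewrite /prob_iid /pr !big_mkcond /=.
have h1 : forall t : n.-tuple (triple X Y1 Y2),
   (if E (map_tuple fst t) then \prod_(i < n) P (tnth t i) else 0) =
   w P t * (fun u => if E u then 1 else 0) (map_tuple fst t).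
  by move=> t /=; case: ifP; rewrite ?mulr1 ?mulr0.
under eq_bigr do rewrite h1.
rewrite (@marg_sum R (X * Y1)%type Y2 n P (fun u => if E u then 1 else 0)).
rewrite [RHS]big_mkcond /=.
apply: eq_bigr => u _; case: ifP; rewrite ?mulr1 ?mulr0 // => _.
by apply: eq_bigr => i _; rewrite /marg_XY1; case: (tnth u i).
Qed.

Lemma dec1E n (c : Defs.code X Y1 Y2 n) (t : n.-tuple (triple X Y1 Y2)) :
  dec1 c t = psi1 (phi1 c (map_tuple fst (map_tuple fst t))) (map_tuple snd (map_tuple fst t)).
Proof.
rewrite /dec1 /xs /y1s; congr (psi1 (phi1 c _) _); apply: eq_from_tnth => i;
  by rewrite !tnth_map.
Qed.

Lemma marg_pmf P : is_pmf P -> is_pmf (marg_XY1 P).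
Proof.
move=> [P0 P1]; split.
  by move=> xy; apply: sumr_ge0 => y2 _.
rewrite -P1 /marg_XY1 pair_big /=; apply: eq_bigr => -[[x y1] y2] _ //.
Qed.

Lemma marg_pos P Pb : is_pmf P -> (forall z, 0 < Pb z) -> forall xy, 0 < marg_XY1 Pb xy.
Proof.
move=> [P0 P1] Pbp xy.
case: (pickP (fun _ : triple X Y1 Y2 => true)) => [z _|H]; last first.
  move: P1; rewrite big1 => [/eqP|z _]; first by rewrite eq_sym oner_eq0.
  by have := H z.
rewrite /marg_XY1 (bigD1 z.2) //=.
have := Pbp (xy.1, xy.2, z.2).
have : 0 <= \sum_(i | i != z.2) Pb (xy.1, xy.2, i) by apply: sumr_ge0 => i _; apply: ltW.
lra.
Qed.

Lemma achievable_sub P Pb R1 R2 e1 e2 (th : R * R) :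
  is_pmf P -> is_pmf Pb -> (forall z, 0 < Pb z) -> e1 < 1 -> e2 < 1 ->
  achievable P Pb R1 R2 e1 e2 th ->
  th.1 <= kl (marg_XY1 P) (marg_XY1 Pb) /\ th.2 <= kl P Pb.
Proof.
move=> Pp Pbpmf Pbp e11 e21 [c [a1 a2 b1 b2 _]].
have Pp' := Pp; case: Pp' => P0 P1.
split.
  pose A n := fun u : n.-tuple (X * Y1) =>
    ~~ psi1 (phi1 (c n) (map_tuple fst u)) (map_tuple snd u).
  have [Q0 Q1] := marg_pmf Pp.
  apply: (@stein_conv R _ _ _ A e1) => //.
  - exact: marg_pos Pp Pbp.
  - move=> eps eps0; have [N HN] := esup_ev a1 eps0; exists N => n /HN.
    suff -> : 1 - pr (marg_XY1 P) (A n) = alpha P (c n) false by [].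
    rewrite /A pr_compl // -pr_marg /alpha opprB addrC subrK.
    by rewrite /prob_iid; apply: eq_bigl => t; rewrite dec1E.
  - move: b1; congr (_ <= limn_einf _)%E; apply/funext => n /=.
    rewrite /beta /A -pr_marg; congr (exponent _ _).
    by rewrite /prob_iid; apply: eq_bigl => t; rewrite dec1E.
pose A n := fun t : n.-tuple (triple X Y1 Y2) => ~~ dec2 (c n) t.
apply: (@stein_conv R _ _ _ A e2) => //.
- move=> eps eps0; have [N HN] := esup_ev a2 eps0; exists N => n /HN.
  suff -> : 1 - pr P (A n) = alpha P (c n) true by [].
  by rewrite /A pr_compl // /alpha opprB addrC subrK.
Qed.

End Main1.


Section Ev2.
Variable R : realType.

Lemma card_bound (T : finType) n (F : 'I_n -> T -> R) (S : {set n.-tuple T}) (c : R) :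
  (forall i y, 0 <= F i y) -> (forall i, \sum_y F i y <= 1) ->
  (forall t, t \in S -> (forall i, 0 < F i (tnth t i)) /\
                        \sum_(i < n) - ln (F i (tnth t i)) <= c) ->
  #|S|%:R <= expR c.
Proof.
move=> F0 F1 H.
have H1 : \sum_(t in S) expR (- c) <= \sum_(t in S) \prod_(i < n) F i (tnth t i).
  apply: ler_sum => t tS; have [pos sc] := H t tS.
  rewrite (eq_bigr (fun i => expR (ln (F i (tnth t i))))); last first.
    by move=> i _; rewrite lnK // posrE.
  rewrite -expR_sum ler_expR; move: sc; rewrite sumrN; lra.
have H2 : \sum_(t in S) \prod_(i < n) F i (tnth t i) <= \sum_t \prod_(i < n) F i (tnth t i).
  rewrite [X in _ <= X](bigID (fun t => t \in S)) /= lerDl.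
  by apply: sumr_ge0 => t _; apply: prodr_ge0.
have H3 : \sum_t \prod_(i < n) F i (tnth t i) <= 1.
  rewrite prodsum; apply: prodr_ile1 => i _; rewrite F1 andbT.
  by apply: sumr_ge0.
have := le_trans H1 (le_trans H2 H3).
rewrite sumr_const => h.
have : #|S|%:R * (expR c)^-1 <= 1 by rewrite mulr_natl -expRN.
by rewrite ler_pdivrMr ?expR_gt0 // mul1r.
Qed.

Lemma beta_bound (T : finType) n (Q Qb : T -> R) (E : pred (n.-tuple T)) (c : R) :
  (forall x, 0 <= Q x) -> \sum_x Q x = 1 -> (forall x, 0 < Qb x) ->
  (forall t, E t -> (forall i, 0 < Q (tnth t i)) /\
                    c <= \sum_(i < n) llr Q Qb (tnth t i)) ->
  pr Qb E <= expR (- c).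
Proof.
move=> Q0 Q1 Qbp H.
apply: (@le_trans _ _ (\sum_(t | E t) w Q t * expR (- c))).
  apply: ler_sum => t Et; have [pos cS] := H t Et.
  rewrite (w_llr pos Qbp) -mulrA -expRD.
  have w0 : 0 <= w Qb t by apply: w_ge0 => x; apply: ltW.
  by rewrite ler_peMr // -expR0 ler_expR; lra.
rewrite -mulr_suml ler_piMl ?expR_ge0 //.
rewrite -(sum_w n Q1) [X in _ <= X](bigID E) /= lerDl.
by apply: sumr_ge0 => t _; apply: w_ge0.
Qed.

Lemma exponent_bound (b c : R) n : (0 < n)%N -> 0 <= b -> b <= expR (- c) ->
  ((c / n%:R)%:E <= exponent b n)%E.
Proof.
move=> n0 b0 bc; rewrite /exponent; case: eqP => [_|/eqP bn0]; first by rewrite leey.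
have bp : 0 < b by rewrite lt_def bn0 b0.
rewrite lee_fin ler_pM2r ?invr_gt0 ?ltr0n //.
have : ln b <= ln (expR (- c)) by rewrite ler_ln ?posrE ?expR_gt0.
rewrite expRK; lra.
Qed.

Lemma rate_bound (K : nat) (c : R) n : (0 < n)%N -> 0 <= c -> K%:R <= expR c ->
  ln (K.+1)%:R / n%:R <= ln 2 / n%:R + c / n%:R.
Proof.
move=> n0 c0 Kc; rewrite -mulrDl ler_pM2r ?invr_gt0 ?ltr0n //.
have e1 : 1 <= expR c by rewrite -expR0 ler_expR.
have : (K.+1)%:R <= 2 * expR c :> R by rewrite -addn1 natrD; lra.
rewrite -ler_ln ?posrE ?ltr0n ?mulr_gt0 ?expR_gt0 // lnM ?posrE ?expR_gt0 // expRK.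
by [].
Qed.

End Ev2.


Section Ach.
Variables (R : realType) (X Y1 Y2 : finType).
Variables (P Pb : triple X Y1 Y2 -> R).
Variable (P0 : forall z, 0 <= P z).
Variable (Psum : \sum_z P z = 1).
Variable (Pbp : forall z, 0 < Pb z).
Variables (x0 : X) (y0 : Y1).

Local Notation P1 := (marg_XY1 P).
Local Notation Pb1 := (marg_XY1 Pb).
Local Notation PX := (marg_X P).
Local Notation HX := (entropy_X P).
Local Notation HY := (cond_entropy_Y1_X P).
Local Notation D1 := (kl (marg_XY1 P) (marg_XY1 Pb)).
Local Notation D2 := (kl P Pb).

Lemma sum_pair (A B : finType) (F : (A * B)%type -> R) :
  \sum_p F p = \sum_a \sum_b F (a, b).
Proof. by rewrite pair_bigA; apply: eq_bigr => -[]. Qed.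

Lemma PXE x : PX x = \sum_y P1 (x, y).
Proof. by []. Qed.

Lemma P1_ge0 a : 0 <= P1 a.
Proof. by apply: sumr_ge0 => y _. Qed.

Lemma P1sum : \sum_a P1 a = 1.
Proof. by have [] := marg_pmf (conj P0 Psum). Qed.

Lemma PX_ge0 x : 0 <= PX x.
Proof. by apply: sumr_ge0 => y _; apply: sumr_ge0. Qed.

Lemma PXsum : \sum_x PX x = 1.
Proof. by rewrite -P1sum sum_pair. Qed.

Lemma P1_le_PX a : P1 a <= PX a.1.
Proof.
case: a => x y; rewrite PXE (bigD1 y) //= lerDl.
by apply: sumr_ge0 => i _; exact: P1_ge0.
Qed.

Lemma P_le_P1 z : P z <= P1 z.1.
Proof.
case: z => -[x y] y2; rewrite /marg_XY1 (bigD1 y2) //= lerDl.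
by apply: sumr_ge0 => i _.
Qed.

Lemma mean_fst (f : (X * Y1)%type -> R) :
  mean P (fun z => f z.1) = mean P1 f.
Proof.
rewrite /mean sum_pair; apply: eq_bigr => -[x y] _.
by rewrite /marg_XY1 mulr_suml.
Qed.

Lemma mean_g1 : mean P1 (fun a => - ln (PX a.1)) = HX.
Proof.
rewrite /mean /entropy_X -sumrN sum_pair; apply: eq_bigr => x _.
by rewrite /= -mulr_suml -PXE mulrN.
Qed.

Lemma mean_g2 : mean P1 (fun a => - ln (P1 a / PX a.1)) = HY.
Proof. by rewrite /mean /cond_entropy_Y1_X -sumrN; apply: eq_bigr => a _; rewrite mulrN. Qed.

Lemma HX_ge0 : 0 <= HX.
Proof.
rewrite /entropy_X oppr_ge0; apply: sumr_le0 => x _.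
apply: mulr_ge0_le0; first exact: PX_ge0.
apply: ln_le0; rewrite -PXsum (bigD1 x) //= lerDl.
by apply: sumr_ge0 => i _; exact: PX_ge0.
Qed.

Lemma HY_ge0 : 0 <= HY.
Proof.
rewrite /cond_entropy_Y1_X oppr_ge0; apply: sumr_le0 => a _.
apply: mulr_ge0_le0; first exact: P1_ge0.
apply: ln_le0; have := P1_le_PX a; have := P1_ge0 a.
case: (eqVneq (PX a.1) 0) => [->|h]; first by rewrite invr0 mulr0.
have hp : 0 < PX a.1 by rewrite lt_def h PX_ge0.
by move=> _ H; rewrite ler_pdivrMr // mul1r.
Qed.


Section Code.
Variable n : nat.
Local Notation dd := (@dl R n).

Definition S1 : {set n.-tuple X} :=
  [set x | [forall i, 0 < PX (tnth x i)] &&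
           (\sum_(i < n) - ln (PX (tnth x i)) <= n%:R * (HX + dd))].
Definition S2 (u : n.-tuple X) : {set n.-tuple Y1} :=
  [set y | [forall i, 0 < P1 (tnth u i, tnth y i)] &&
     (\sum_(i < n) - ln (P1 (tnth u i, tnth y i) / PX (tnth u i)) <= n%:R * (HY + dd))].
Definition K1 := #|S1|.
Definition K2 := \max_(u : n.-tuple X) #|S2 u|.
Definition dx : n.-tuple X := nseq_tuple n x0.
Definition dy : n.-tuple Y1 := nseq_tuple n y0.
Definition enc1 (x : n.-tuple X) : 'I_K1.+1 := inord (index x (enum S1)).
Definition decx (m : 'I_K1.+1) : n.-tuple X := nth dx (enum S1) m.
Definition enc2 (m : 'I_K1.+1) (y : n.-tuple Y1) : 'I_K2.+1 :=
  inord (index y (enum (S2 (decx m)))).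
Definition decy (m1 : 'I_K1.+1) (m2 : 'I_K2.+1) : n.-tuple Y1 :=
  nth dy (enum (S2 (decx m1))) m2.
Definition T1 (x : n.-tuple X) (y : n.-tuple Y1) :=
  [forall i, 0 < P1 (tnth x i, tnth y i)] &&
  (n%:R * (D1 - dd) <= \sum_(i < n) llr P1 Pb1 (tnth x i, tnth y i)).
Definition T2 (x : n.-tuple X) (y1 : n.-tuple Y1) (y2 : n.-tuple Y2) :=
  [forall i, 0 < P (tnth x i, tnth y1 i, tnth y2 i)] &&
  (n%:R * (D2 - dd) <= \sum_(i < n) llr P Pb (tnth x i, tnth y1 i, tnth y2 i)).
Definition ps1 (m : 'I_K1.+1) (y : n.-tuple Y1) := ~~ ((m < K1)%N && T1 (decx m) y).
Definition ps2 (m1 : 'I_K1.+1) (m2 : 'I_K2.+1) (y2 : n.-tuple Y2) :=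
  ~~ [&& (m1 < K1)%N, (m2 < #|S2 (decx m1)|)%N & T2 (decx m1) (decy m1 m2) y2].
Definition thecode : Defs.code X Y1 Y2 n := Code enc1 enc2 ps1 ps2.

Lemma enc1E x : (enc1 x : nat) = index x (enum S1).
Proof. by rewrite inordK // ltnS /K1 cardE index_size. Qed.

Lemma ok1E x : ((enc1 x : nat) < K1)%N = (x \in S1).
Proof. by rewrite enc1E /K1 cardE index_mem mem_enum. Qed.

Lemma decx_enc1 x : x \in S1 -> decx (enc1 x) = x.
Proof. by move=> xS; rewrite /decx enc1E nth_index // mem_enum. Qed.

Lemma S2_le_K2 u : (#|S2 u| <= K2)%N.
Proof. by rewrite /K2; apply: (@leq_bigmax _ (fun u : n.-tuple X => #|S2 u|) u). Qed.

Lemma enc2E m y : (enc2 m y : nat) = index y (enum (S2 (decx m))).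
Proof.
rewrite inordK // ltnS; apply: leq_trans (S2_le_K2 (decx m)).
by rewrite cardE index_size.
Qed.

Lemma ok2E m y : ((enc2 m y : nat) < #|S2 (decx m)|)%N = (y \in S2 (decx m)).
Proof. by rewrite enc2E cardE index_mem mem_enum. Qed.

Lemma decy_enc2 m y : y \in S2 (decx m) -> decy m (enc2 m y) = y.
Proof. by move=> yS; rewrite /decy enc2E nth_index // mem_enum. Qed.

Lemma pair_tnth (u : n.-tuple (X * Y1)) i :
  (tnth (map_tuple fst u) i, tnth (map_tuple snd u) i) = tnth u i.
Proof. by rewrite !tnth_map; case: (tnth u i). Qed.

Lemma triple_tnth (t : n.-tuple (triple X Y1 Y2)) i :
  (tnth (xs t) i, tnth (y1s t) i, tnth (y2s t) i) = tnth t i.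
Proof. by rewrite !tnth_map; case: (tnth t i) => -[]. Qed.

Lemma pair_tnth' (t : n.-tuple (triple X Y1 Y2)) i :
  (tnth (xs t) i, tnth (y1s t) i) = (tnth t i).1.
Proof. by rewrite !tnth_map; case: (tnth t i) => -[]. Qed.

Lemma xs_tnth (t : n.-tuple (triple X Y1 Y2)) i : tnth (xs t) i = (tnth t i).1.1.
Proof. by rewrite tnth_map. Qed.

Definition G1 (u : n.-tuple (X * Y1)) := ps1 (enc1 (map_tuple fst u)) (map_tuple snd u).

Lemma G1_neg u : ~~ G1 u = (map_tuple fst u \in S1) && T1 (map_tuple fst u) (map_tuple snd u).
Proof.
rewrite /G1 /ps1 negbK ok1E; case h: (_ \in S1) => //=.
by rewrite decx_enc1.
Qed.

Lemma dec2_neg t : ~~ dec2 thecode t =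
  [&& xs t \in S1, y1s t \in S2 (xs t) & T2 (xs t) (y1s t) (y2s t)].
Proof.
rewrite /dec2 /= /ps2 negbK ok1E.
case hx: (xs t \in S1) => //=.
have dm := decx_enc1 hx.
rewrite ok2E; case hy: (y1s t \in S2 (decx (enc1 (xs t)))).
  by rewrite decy_enc2 // dm; move: hy; rewrite dm => ->.
by move: hy; rewrite dm => ->.
Qed.

Definition Cev (T : finType) (Q f : T -> R) (t : n.-tuple T) : bool :=
  n%:R * dd <= `|\sum_(i < n) f (tnth t i) - n%:R * mean Q f|.
Definition Zev (T : finType) (Q : T -> R) (t : n.-tuple T) : bool :=
  [exists i, Q (tnth t i) == 0].

Definition g1 (a : (X * Y1)%type) := - ln (PX a.1).

Lemma pos_of_Zev (T : finType) (Q : T -> R) (t : n.-tuple T) :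
  (forall x, 0 <= Q x) -> ~~ Zev Q t -> forall i, 0 < Q (tnth t i).
Proof.
move=> Q0; rewrite negb_exists => /forallP h i.
by rewrite lt_def h Q0.
Qed.

Lemma alpha1_bound : alpha P thecode false <=
  pr P1 (Zev P1) + (pr P1 (Cev P1 g1) + pr P1 (Cev P1 (llr P1 Pb1))).
Proof.
have -> : alpha P thecode false = pr P1 G1.
  rewrite /alpha -pr_marg /prob_iid; apply: eq_bigl => t.
  by rewrite dec1E.
apply: le_trans (pr_union (E1 := Zev P1) (E2 := fun u => Cev P1 g1 u || Cev P1 (llr P1 Pb1) u) P1_ge0 _) _.
  move=> u Gu; case: (boolP (Zev P1 u)) => //= nz.
  have pos := pos_of_Zev P1_ge0 nz.
  move: Gu; rewrite -[G1 u]negbK G1_neg negb_and => /orP [nS | nT].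
    apply/orP; left; rewrite inE in nS.
    have fa : [forall i, 0 < PX (tnth (map_tuple fst u) i)].
      apply/forallP => i; rewrite tnth_map.
      exact: lt_le_trans (pos i) (P1_le_PX _).
    rewrite fa /= -ltNge in nS.
    rewrite /Cev mean_g1; apply: le_trans (ler_norm _).
    rewrite (eq_bigr (fun i => - ln (PX (tnth (map_tuple fst u) i)))); last first.
      by move=> i _; rewrite tnth_map.
    lra.
  apply/orP; right; rewrite /T1 in nT.
  have fa : [forall i, 0 < P1 (tnth (map_tuple fst u) i, tnth (map_tuple snd u) i)].
    by apply/forallP => i; rewrite pair_tnth pos.
  rewrite fa /= -ltNge in nT.
  rewrite (eq_bigr (fun i => llr P1 Pb1 (tnth u i))) in nT; last first.
    by move=> i _; rewrite pair_tnth.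
  rewrite /Cev distrC; apply: le_trans (ler_norm _).
  rewrite (_ : mean P1 (llr P1 Pb1) = D1) //; lra.
rewrite lerD2l; apply: pr_union; first exact: P1_ge0.
by move=> u.
Qed.

Lemma beta1_bound : beta Pb thecode false <= expR (- (n%:R * (D1 - dd))).
Proof.
have -> : beta Pb thecode false = pr Pb1 (fun u => ~~ G1 u).
  rewrite /beta -pr_marg /prob_iid; apply: eq_bigl => t.
  by rewrite dec1E.
have [Q0 Q1] := marg_pmf (conj P0 Psum).
apply: beta_bound => //; first exact: marg_pos (conj P0 Psum) Pbp.
move=> u; rewrite G1_neg => /andP [_ /andP [/forallP fa H]]; split.
  by move=> i; rewrite -pair_tnth fa.
by apply: (le_trans H); rewrite le_eqVlt; apply/orP; left; apply/eqP;
  apply: eq_bigr => i _; rewrite pair_tnth.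
Qed.

Definition g1' (z : triple X Y1 Y2) := - ln (PX z.1.1).
Definition g2' (z : triple X Y1 Y2) := - ln (P1 z.1 / PX z.1.1).

Lemma alpha2_bound : alpha P thecode true <=
  pr P (Zev P) + (pr P (Cev P g1') + (pr P (Cev P g2') + pr P (Cev P (llr P Pb)))).
Proof.
rewrite /alpha /=.
apply: le_trans (pr_union (E1 := Zev P)
  (E2 := fun u => [|| Cev P g1' u, Cev P g2' u | Cev P (llr P Pb) u]) P0 _) _; last first.
  rewrite lerD2l; apply: le_trans (pr_union (E1 := Cev P g1')
     (E2 := fun u => Cev P g2' u || Cev P (llr P Pb) u) P0 _) _ => //.
  by rewrite lerD2l; apply: pr_union.
move=> t D; case: (boolP (Zev P t)) => //= nz.
have pos := pos_of_Zev P0 nz.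
have pos1 : forall i, 0 < P1 (tnth t i).1 by move=> i; exact: lt_le_trans (pos i) (P_le_P1 _).
have posX : forall i, 0 < PX (tnth t i).1.1 by move=> i; exact: lt_le_trans (pos1 i) (P1_le_PX _).
have mg1 : mean P g1' = HX by rewrite /g1' (mean_fst (fun a => - ln (PX a.1))) mean_g1.
have mg2 : mean P g2' = HY by rewrite /g2' (mean_fst (fun a => - ln (P1 a / PX a.1))) mean_g2.
have {D} : dec2 thecode t := D; rewrite -[dec2 _ t]negbK dec2_neg.
case hx: (xs t \in S1) => /=; last first.
  move=> _; apply/orP; left; move: hx; rewrite inE => /negbT.
  have fa : [forall i, 0 < PX (tnth (xs t) i)] by apply/forallP => i; rewrite xs_tnth.
  rewrite fa /= -ltNge => hx.
  rewrite /Cev mg1; apply: le_trans (ler_norm _).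
  rewrite (eq_bigr (fun i => - ln (PX (tnth (xs t) i)))); last first.
    by move=> i _; rewrite xs_tnth.
  lra.
case hy: (y1s t \in S2 (xs t)) => /=; last first.
  move=> _; apply/orP; right; apply/orP; left; move: hy; rewrite inE => /negbT.
  have fa : [forall i, 0 < P1 (tnth (xs t) i, tnth (y1s t) i)].
    by apply/forallP => i; rewrite pair_tnth'.
  rewrite fa /= -ltNge => hy.
  rewrite /Cev mg2; apply: le_trans (ler_norm _).
  rewrite (eq_bigr (fun i => - ln (P1 (tnth (xs t) i, tnth (y1s t) i) / PX (tnth (xs t) i)))); last first.
    by move=> i _; rewrite /g2' pair_tnth' xs_tnth.
  lra.
rewrite /T2 => nT; apply/orP; right; apply/orP; right.
have fa : [forall i, 0 < P (tnth (xs t) i, tnth (y1s t) i, tnth (y2s t) i)].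
  by apply/forallP => i; rewrite triple_tnth.
rewrite fa /= -ltNge in nT.
rewrite (eq_bigr (fun i => llr P Pb (tnth t i))) in nT; last first.
  by move=> i _; rewrite triple_tnth.
rewrite /Cev distrC; apply: le_trans (ler_norm _).
rewrite (_ : mean P (llr P Pb) = D2) //; lra.
Qed.

Lemma beta2_bound : beta Pb thecode true <= expR (- (n%:R * (D2 - dd))).
Proof.
rewrite /beta /=.
apply: (@beta_bound R _ n P Pb) => // t.
rewrite dec2_neg => /and3P [_ _ /andP [/forallP fa H]]; split.
  by move=> i; rewrite -triple_tnth fa.
by apply: (le_trans H); rewrite le_eqVlt; apply/orP; left; apply/eqP;
  apply: eq_bigr => i _; rewrite triple_tnth.
Qed.

End Code.


Lemma dl_ge0 n : 0 <= @dl R n.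
Proof. by rewrite /dl invr_ge0 sqrtr_ge0. Qed.

Lemma K1_bound n : (K1 n)%:R <= expR (n%:R * (HX + @dl R n)).
Proof.
apply: (@card_bound R X n (fun _ x => PX x)) => //.
- by move=> i y; exact: PX_ge0.
- by move=> i; rewrite PXsum.
- move=> t; rewrite inE => /andP [/forallP fa H]; split => //.
Qed.

Lemma K2_bound n : (K2 n)%:R <= expR (n%:R * (HY + @dl R n)).
Proof.
have c0 : (0 < #|{: n.-tuple X}|)%N by apply/card_gt0P; exists (dx n).
have [u Hu] := bigop.eq_bigmax (fun u : n.-tuple X => #|S2 u|) c0.
rewrite /K2 Hu.
apply: (@card_bound R Y1 n (fun i y => P1 (tnth u i, y) / PX (tnth u i))).
- by move=> i y; apply: divr_ge0; [exact: P1_ge0|exact: PX_ge0].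
- move=> i; rewrite -mulr_suml -PXE.
  case: (eqVneq (PX (tnth u i)) 0) => [->|h]; first by rewrite mul0r.
  by rewrite divff.
- move=> t; rewrite inE => /andP [/forallP fa H]; split => // i.
  apply: divr_gt0 => //; apply: lt_le_trans (fa i) _.
  exact: (P1_le_PX (tnth u i, tnth t i)).
Qed.

Lemma Zev0 n (T : finType) (Q : T -> R) : pr Q (@Zev n T Q) = 0.
Proof. by apply: pr_zero => t /existsP [i /eqP h]; exists i. Qed.

Lemma ach_main (e1 e2 R1 R2 : R) (th : R * R) :
  0 < e1 -> 0 < e2 -> HX <= R1 -> HY <= R2 -> th.1 <= D1 -> th.2 <= D2 ->
  achievable P Pb R1 R2 e1 e2 th.
Proof.
move=> e10 e20 HR1 HR2 t1 t2.
have [Q0 Q1] := marg_pmf (conj P0 Psum).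
exists (fun n => thecode n); split; [| | | |split].
- apply: esup_le => eps eps0.
  have h1 := @wlln R _ P1 g1 (@dl R) Q0 Q1 (@ev_ndl R) (e1 / 2) ltac:(by rewrite divr_gt0).
  have h2 := @wlln R _ P1 (llr P1 Pb1) (@dl R) Q0 Q1 (@ev_ndl R) (e1 / 2) ltac:(by rewrite divr_gt0).
  apply: evW (evI h1 h2) => n [a b].
  apply: le_trans (alpha1_bound n) _; rewrite Zev0.
  have : pr P1 (@Cev n _ P1 g1) <= e1 / 2 := a.
  have : pr P1 (@Cev n _ P1 (llr P1 Pb1)) <= e1 / 2 := b.
  lra.
- apply: esup_le => eps eps0.
  have h1 := @wlln R _ P g1' (@dl R) P0 Psum (@ev_ndl R) (e2 / 3) ltac:(by rewrite divr_gt0).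
  have h2 := @wlln R _ P g2' (@dl R) P0 Psum (@ev_ndl R) (e2 / 3) ltac:(by rewrite divr_gt0).
  have h3 := @wlln R _ P (llr P Pb) (@dl R) P0 Psum (@ev_ndl R) (e2 / 3) ltac:(by rewrite divr_gt0).
  apply: evW (evI h1 (evI h2 h3)) => n [a [b c]].
  apply: le_trans (alpha2_bound n) _; rewrite Zev0.
  have : pr P (@Cev n _ P g1') <= e2 / 3 := a.
  have : pr P (@Cev n _ P g2') <= e2 / 3 := b.
  have : pr P (@Cev n _ P (llr P Pb)) <= e2 / 3 := c.
  lra.
- apply: einf_ge => eps eps0.
  apply: evW (evI (ev_dl eps0) (@ev_gt0 R)) => n [dn n0].
  have n0' : (0 < n)%N by rewrite -(ltr0n R).
  apply: le_trans (exponent_bound n0' _ (beta1_bound n)); last first.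
    by apply: pr_ge0 => x; apply: ltW.
  by rewrite lee_fin mulrC mulKf ?gt_eqF //; lra.
- apply: einf_ge => eps eps0.
  apply: evW (evI (ev_dl eps0) (@ev_gt0 R)) => n [dn n0].
  have n0' : (0 < n)%N by rewrite -(ltr0n R).
  apply: le_trans (exponent_bound n0' _ (beta2_bound n)); last first.
    by apply: sumr_ge0 => t _; apply: prodr_ge0 => i _; apply: ltW.
  by rewrite lee_fin mulrC mulKf ?gt_eqF //; lra.
- apply: esup_le => eps eps0.
  have eps2 : 0 < eps / 2 by rewrite divr_gt0.
  apply: evW (evI (ev_dl eps2) (evI (ev_div (ln 2) eps2) (@ev_gt0 R))) => n [dn [l2 n0]].
  have n0' : (0 < n)%N by rewrite -(ltr0n R).
  have c0 : 0 <= n%:R * (HX + @dl R n) by rewrite mulr_ge0 ?addr_ge0 ?HX_ge0 ?dl_ge0.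
  apply: le_trans (rate_bound n0' c0 (K1_bound n)) _.
  have -> : n%:R * (HX + @dl R n) / n%:R = HX + @dl R n by rewrite mulrC mulKf ?gt_eqF.
  have := dl_ge0 n; lra.
- apply: esup_le => eps eps0.
  have eps2 : 0 < eps / 2 by rewrite divr_gt0.
  apply: evW (evI (ev_dl eps2) (evI (ev_div (ln 2) eps2) (@ev_gt0 R))) => n [dn [l2 n0]].
  have n0' : (0 < n)%N by rewrite -(ltr0n R).
  have c0 : 0 <= n%:R * (HY + @dl R n) by rewrite mulr_ge0 ?addr_ge0 ?HY_ge0 ?dl_ge0.
  apply: le_trans (rate_bound n0' c0 (K2_bound n)) _.
  have -> : n%:R * (HY + @dl R n) / n%:R = HY + @dl R n by rewrite mulrC mulKf ?gt_eqF.
  have := dl_ge0 n; lra.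
Qed.

End Ach.

Local Open Scope classical_set_scope.
Local Open Scope ring_scope.
Lemma prop1_aux (R : realType) (X Y1 Y2 : finType)
  (P Pb : triple X Y1 Y2 -> R) (R1 R2 : R) :
  is_pmf P -> is_pmf Pb -> (forall z, 0 < Pb z) ->
  entropy_X P <= R1 -> cond_entropy_Y1_X P <= R2 ->
  forall e1 e2 : R, 0 < e1 < 1 -> 0 < e2 < 1 ->
  [set th : R * R | 0 <= th.1 /\ 0 <= th.2] `&` region P Pb R1 R2 e1 e2 =
  [set th : R * R | [/\ 0 <= th.1, 0 <= th.2,
      th.1 <= kl (marg_XY1 P) (marg_XY1 Pb) & th.2 <= kl P Pb]].
Proof.
move=> Ppmf Pbpmf Pbp hR1 hR2 e1 e2 /andP[e10 e11] /andP[e20 e21].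
have [P0 P1] := Ppmf.
case: (pickP (fun _ : triple X Y1 Y2 => true)) => [z _|H]; last first.
  move: P1; rewrite big1 => [/eqP|z _]; first by rewrite eq_sym oner_eq0.
  by have := H z.
set D1 := kl (marg_XY1 P) (marg_XY1 Pb).
set D2 := kl P Pb.
set C := [set th : (R * R)%type | th.1 <= D1 /\ th.2 <= D2].
have cC : closed C.
  have -> : C = fst @^-1` [set x | x <= D1] `&` snd @^-1` [set x | x <= D2].
    by apply/seteqP; split => th.
  apply: closedI; apply: preimage_closed; try exact: closed_le.
    by move=> x _; apply: cvg_fst.
  by move=> x _; apply: cvg_snd.
apply/seteqP; split => th.
  move=> [[t1 t2] cl].
  have : C th.
    rewrite (closure_id C).1 //; apply: (closureS _ cl) => a Aa.
    exact: achievable_sub Ppmf Pbpmf Pbp e11 e21 Aa.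
  by move=> [a b]; split.
move=> [t1 t2 d1 d2]; split; first by [].
apply: subset_closure.
exact: (ach_main P0 P1 Pbp z.1.1 z.1.2 e10 e20 hR1 hR2 d1 d2).
Qed.

End PropHelpers.

Local Open Scope classical_set_scope.
Local Open Scope ring_scope.

Theorem proposition1 (R : realType) (X Y1 Y2 : finType)
  (P Pb : triple X Y1 Y2 -> R) (R1 R2 : R) :
  is_pmf P -> is_pmf Pb -> (forall z, 0 < Pb z) ->
  entropy_X P <= R1 -> cond_entropy_Y1_X P <= R2 ->
  forall e1 e2 : R, 0 < e1 < 1 -> 0 < e2 < 1 ->
  [set th : R * R | 0 <= th.1 /\ 0 <= th.2] `&` region P Pb R1 R2 e1 e2 =
  [set th : R * R | [/\ 0 <= th.1, 0 <= th.2,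
      th.1 <= kl (marg_XY1 P) (marg_XY1 Pb) & th.2 <= kl P Pb]].
Proof. exact: PropHelpers.prop1_aux. Qed.
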